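(* Let $n\ge 2$ and $\Omega=\{x\in\mathbb{R}^n:0<|x|<1\}$, so $\partial\Omega=\{|x|=1\}\cup\{0\}$. Then the Dirichlet problem \[ Q_\infty u=0\ \text{ in }\Omega,\qquad u(x)=x\ \text{ for }x\in\partial\Omega, \] admits infinitely many solutions $u\in C^\infty(\Omega;\mathbb{R}^n)\cap C^0(\overline\Omega;\mathbb{R}^n)$ with $\det Du\neq0$ on $\Omega$. More precisely, for every $\gamma>-1$ the map $u(x)=|x|^\gamma x$ (with $u(0)=0$) is such a solution and is a diffeomorphism of $\Omega$ onto itself.
   Context: Define the dilation $K:\mathbb{R}^{n\times n}\to[0,\infty]$ by $K(P)=|P|^2/\det(P^\top P)^{1/n}$ if $\operatorname{rk}(P)=n$ and $K(P)=+\infty$ otherwise, where $|P|^2=\sum_{\alpha,i}P_{\alpha i}^2$. $K$ is smooth on the open set of invertible matrices; write $K_P(P)\in\mathbb{R}^{n\times n}$ for the matrix of first partial derivatives $\partial K/\partial P_{\alpha i}$ and $K_{PP}$ for the second derivatives $\partial^2K/\partial P_{\alpha i}\partial P_{\beta j}$. For $u\in C^2(\Omega;\mathbb{R}^n)$ with $Du$ invertible everywhere, define \[ (Q_\infty u)_\alpha:=\sum_{i,j,\beta}\Big(K_{P_{\alpha i}}(Du)K_{P_{\beta j}}(Du)+\sum_{\gamma}[K_P(Du)]^\perp_{\alpha\gamma}K_{P_{\gamma i}P_{\beta j}}(Du)\Big)D^2_{ij}u_\beta, \] where $[K_P(Du(x))]^\perp$ is the orthogonal projection of $\mathbb{R}^n$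 onto the null space of $K_P(Du(x))^\top$. *)

(* Defs.v *)
From Stdlib Require Import Reals.
From mathcomp Require Import ssreflect ssrfun ssrbool eqtype ssrnat seq choice
  fintype finfun bigop fingroup perm.
Set Implicit Arguments.
Unset Strict Implicit.
Open Scope R_scope.

Definition vec (n : nat) := 'I_n -> R.
Definition mat (n : nat) := 'I_n -> 'I_n -> R.

Definition rsum (n : nat) (f : 'I_n -> R) : R := \big[Rplus/R0]_(i : 'I_n) f i.

Definition dot (n : nat) (x y : vec n) : R := rsum (fun i => x i * y i).
Definition norm (n : nat) (x : vec n) : R := sqrt (dot x x).
Definition vadd (n : nat) (x y : vec n) : vec n := fun i => x i + y i.
Definition vscale (n : nat) (t : R) (x : vec n) : vec n := fun i => t * x i.
Definition vzero (n : nat) : vec n := fun _ => 0.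
Definition basis (n : nat) (j : 'I_n) : vec n := fun i => if i == j then 1 else 0.
Definition dist (n : nat) (x y : vec n) : R := norm (fun i => x i - y i).

Definition Omega (n : nat) (x : vec n) : Prop := 0 < norm x < 1.
Definition closure_Omega (n : nat) (x : vec n) : Prop := norm x <= 1.
Definition boundary_Omega (n : nat) (x : vec n) : Prop :=
  norm x = 1 \/ x = @vzero n.

Definition cont_on (n : nat) (U : vec n -> Prop) (g : vec n -> R) : Prop :=
  forall x, U x -> forall eps, 0 < eps -> exists delta, 0 < delta /\
    forall y, U y -> dist y x < delta -> Rabs (g y - g x) < eps.
Definition cont_map (n : nat) (U : vec n -> Prop) (u : vec n -> vec n) : Prop :=
  forall a, cont_on U (fun x => u x a).

(* D l is the iterated partial derivative along the list l of
   coordinate directions (D [::] = f, D (j :: l) = d_j (D l)). *)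
Definition smooth_on (n : nat) (U : vec n -> Prop) (f : vec n -> R) : Prop :=
  exists D : seq 'I_n -> vec n -> R,
    (forall x, U x -> D [::] x = f x) /\
    forall l, cont_on U (D l) /\
      forall x, U x -> forall j,
        derivable_pt_lim (fun t => D l (vadd x (vscale t (basis j)))) 0
          (D (j :: l) x).
Definition smooth_map (n : nat) (U : vec n -> Prop) (u : vec n -> vec n) : Prop :=
  forall a, smooth_on U (fun x => u x a).

(* Du x a i = d_i u_a (x);  D2u x b i j = d_i d_j u_b (x) *)
Definition isDu (n : nat) (U : vec n -> Prop) (u : vec n -> vec n)
  (Du : vec n -> mat n) : Prop :=
  forall x, U x -> forall a i,
    derivable_pt_lim (fun t => u (vadd x (vscale t (basis i))) a) 0 (Du x a i).
Definition isD2u (n : nat) (U : vec n -> Prop) (Du : vec n -> mat n)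
  (D2u : vec n -> 'I_n -> 'I_n -> 'I_n -> R) : Prop :=
  forall x, U x -> forall b i j,
    derivable_pt_lim (fun t => Du (vadd x (vscale t (basis i))) b j) 0
      (D2u x b i j).

Definition madd (n : nat) (P Q : mat n) : mat n := fun a i => P a i + Q a i.
Definition mscale (n : nat) (t : R) (P : mat n) : mat n := fun a i => t * P a i.
Definition matE (n : nat) (a i : 'I_n) : mat n :=
  fun b j => if (b == a) && (j == i) then 1 else 0.
Definition psign (n : nat) (s : 'S_n) : R := if odd_perm s then -1 else 1.
Definition det (n : nat) (P : mat n) : R :=
  \big[Rplus/R0]_(s : 'S_n) (psign s * \big[Rmult/R1]_(i : 'I_n) P i (s i)).
Definition mtm (n : nat) (P : mat n) : mat n :=
  fun a b => rsum (fun k => P k a * P k b).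
Definition frob2 (n : nat) (P : mat n) : R :=
  rsum (fun a => rsum (fun i => P a i ^ 2)).

(* The dilation K on invertible matrices (rank n <-> det <> 0), where it is
   finite; K = +infinity elsewhere, but only its values/derivatives on the
   open set of invertible matrices are used. *)
Definition Kfin (n : nat) (P : mat n) : R :=
  frob2 P / Rpower (det (mtm P)) (/ INR n).

(* KP P a i = dK/dP_{a i} (P); KPP P g i b j = d^2 K / dP_{g i} dP_{b j} (P) *)
Definition Kgrad (n : nat) (KP : mat n -> mat n) : Prop :=
  forall P, det P <> 0 -> forall a i,
    derivable_pt_lim (fun t => Kfin (madd P (mscale t (matE a i)))) 0 (KP P a i).
Definition Khess (n : nat) (KP : mat n -> mat n)
  (KPP : mat n -> 'I_n -> 'I_n -> 'I_n -> 'I_n -> R) : Prop :=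
  forall P, det P <> 0 -> forall g i b j,
    derivable_pt_lim (fun t => KP (madd P (mscale t (matE b j))) g i) 0
      (KPP P g i b j).

Definition in_null_tr (n : nat) (A : mat n) (w : vec n) : Prop :=
  forall i, rsum (fun a => A a i * w a) = 0.
Definition matvec (n : nat) (M : mat n) (v : vec n) : vec n :=
  fun a => rsum (fun g => M a g * v g).
Definition orth_proj_null_tr (n : nat) (A Pi : mat n) : Prop :=
  (forall v, in_null_tr A (matvec Pi v)) /\
  (forall v w, in_null_tr A w -> dot (fun a => v a - matvec Pi v a) w = 0).

(* (Q_infty u)_a at a point, from P = Du(x), KP(P), KPP(P), Pi = [KP(P)]^perp
   and the Hessian D2 b i j = D^2_{ij} u_b (x) *)
Definition Qinf_comp (n : nat) (KPx : mat n)
  (KPPx : 'I_n -> 'I_n -> 'I_n -> 'I_n -> R) (Pi : mat n)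
  (D2 : 'I_n -> 'I_n -> 'I_n -> R) (a : 'I_n) : R :=
  rsum (fun i => rsum (fun j => rsum (fun b =>
    (KPx a i * KPx b j + rsum (fun g => Pi a g * KPPx g i b j)) * D2 b i j))).

Definition is_Qinf_solution (n : nat) (u : vec n -> vec n) : Prop :=
  smooth_map (@Omega n) u /\
  cont_map (@closure_Omega n) u /\
  (forall x, boundary_Omega x -> u x = x) /\
  forall Du D2u, isDu (@Omega n) u Du -> isD2u (@Omega n) Du D2u ->
    forall x, Omega x ->
      det (Du x) <> 0 /\
      forall KP KPP Pi, Kgrad KP -> Khess KP KPP ->
        orth_proj_null_tr (KP (Du x)) Pi ->
        forall a, Qinf_comp (KP (Du x)) (KPP (Du x)) Pi (D2u x) a = 0.

Definition diffeo_onto_self (n : nat) (U : vec n -> Prop) (u : vec n -> vec n)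
  : Prop :=
  smooth_map U u /\ (forall x, U x -> U (u x)) /\
  exists v, smooth_map U v /\ (forall y, U y -> U (v y)) /\
    (forall x, U x -> v (u x) = x) /\ (forall y, U y -> u (v y) = y).

Definition u_gamma (n : nat) (gamma : R) (x : vec n) : vec n :=
  if Req_dec_T (norm x) 0 then @vzero n else vscale (Rpower (norm x) gamma) x.

(* Main.v *)
Require Import Defs.
From Stdlib Require Import Reals Lra Lia FunctionalExtensionality.
From mathcomp Require Import all_boot all_algebra.
From mathcomp Require Import Rstruct.
From Coquelicot Require Import Coquelicot.
Import Defs.
Open Scope R_scope.


Definition del {n:nat} (i j : 'I_n) : R := if i == j then 1 else 0.
Definition NN {n:nat} (x : vec n) : R := dot x x.
Definition line {n:nat} (x : vec n) (j : 'I_n) (t : R) : vec n :=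
  vadd x (vscale t (basis j)).

Lemma del_sym {n} (i j : 'I_n) : del i j = del j i.
Proof. by rewrite /del eq_sym. Qed.
Lemma del_sq {n} (i j : 'I_n) : del i j * del i j = del i j.
Proof. rewrite /del; case: (i == j); ring. Qed.

Lemma rsum_ext {n} {f g : 'I_n -> R} : (forall i, f i = g i) -> rsum f = rsum g.
Proof. move=> h; rewrite /rsum; apply: eq_bigr => i _; exact: h. Qed.
Lemma rsum_add {n} (f g : 'I_n -> R) : rsum (fun i => f i + g i) = rsum f + rsum g.
Proof. by rewrite /rsum big_split. Qed.
Lemma rsum_scal {n} c (f : 'I_n -> R) : rsum (fun i => c * f i) = c * rsum f.
Proof. by rewrite /rsum big_distrr. Qed.
Lemma rsum_0 {n} : rsum (fun _ : 'I_n => 0) = 0.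
Proof. by rewrite /rsum big1. Qed.
Lemma rsum_del {n} (k : 'I_n) (f : 'I_n -> R) : rsum (fun i => del i k * f i) = f k.
Proof.
rewrite /rsum (bigD1 k) //= big1 /del ?eqxx; first ring.
by move=> i /negbTE ->; ring.
Qed.
Lemma rsum_del2 {n} (k : 'I_n) (f : 'I_n -> R) : rsum (fun i => del k i * f i) = f k.
Proof. rewrite -(rsum_del k f); apply: rsum_ext => i; by rewrite del_sym. Qed.
Lemma rsum_ge0 {n} (f : 'I_n -> R) : (forall i, 0 <= f i) -> 0 <= rsum f.
Proof.
move=> h; rewrite /rsum; elim/big_rec: _ => [|i x _ hx]; first lra.
by have := h i; lra.
Qed.
Lemma rsum_ge_term {n} (f : 'I_n -> R) k : (forall i, 0 <= f i) -> f k <= rsum f.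
Proof.
move=> h; rewrite /rsum (bigD1 k) //=.
rewrite -{1}(Rplus_0_r (f k)); apply: Rplus_le_compat_l.
elim/big_rec: _ => [|i x _ hx]; first lra. by have := h i; lra.
Qed.

Lemma NN_ge0 {n} (x : vec n) : 0 <= NN x.
Proof. apply: rsum_ge0 => i; nra. Qed.
Lemma coord_sq_le {n} (x : vec n) i : x i * x i <= NN x.
Proof. apply: (rsum_ge_term (fun i => x i * x i)) => k; nra. Qed.
Lemma norm_NN {n} (x : vec n) : norm x = sqrt (NN x).
Proof. by []. Qed.
Lemma coord_le_norm {n} (x : vec n) i : Rabs (x i) <= norm x.
Proof.
rewrite norm_NN -sqrt_Rsqr_abs; apply: sqrt_le_1_alt.
rewrite /Rsqr; exact: coord_sq_le.
Qed.

Lemma NN_line {n} (x : vec n) j t : NN (line x j t) = NN x + 2 * t * x j + t ^ 2.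
Proof.
rewrite /NN /dot /line /vadd /vscale /basis.
rewrite (rsum_ext (g := fun i => x i * x i + (2 * t) * (del i j * x i) + t^2 * (del i j * 1))).
  by rewrite !rsum_add !rsum_scal !rsum_del; ring.
move=> i; rewrite /del; case: (i == j); ring.
Qed.

Lemma NN_scale {n} (x : vec n) c : NN (vscale c x) = c ^ 2 * NN x.
Proof.
rewrite /NN /dot -rsum_scal; apply: rsum_ext => i; rewrite /vscale; ring.
Qed.
Lemma norm_scale {n} (x : vec n) c : norm (vscale c x) = Rabs c * norm x.
Proof.
rewrite !norm_NN NN_scale sqrt_mult_alt; last (apply: pow2_ge_0).
by rewrite -(sqrt_Rsqr_abs c) /Rsqr /= Rmult_1_r.
Qed.

Lemma Omega_NN {n} (x : vec n) : Omega x <-> 0 < NN x < 1.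
Proof.
rewrite /Omega norm_NN; have h := NN_ge0 x; split.
- move=> [h1 h2]; split.
  + case: (Req_dec (NN x) 0) => e; last lra. by rewrite e sqrt_0 in h1; lra.
  + rewrite -sqrt_1 in h2; apply: sqrt_lt_0_alt; exact h2.
- move=> [h1 h2]; split; first exact: sqrt_lt_R0.
  rewrite -sqrt_1; apply: sqrt_lt_1_alt; lra.
Qed.


Definition ct {n} (x : vec n) (g : vec n -> R) : Prop :=
  forall eps, 0 < eps -> exists d, 0 < d /\
    forall y, dist y x < d -> Rabs (g y - g x) < eps.

Lemma dR f x l : is_derive f x l -> derivable_pt_lim f x l.
Proof. by move/is_derive_Reals. Qed.

Lemma dlim_cont f x l : derivable_pt_lim f x l -> continuity_pt f x.
Proof. move=> H; apply: derivable_continuous_pt; exists l; exact H. Qed.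

Lemma ct_const {n} (x : vec n) c : ct x (fun _ => c).
Proof. move=> e he; exists 1; split; first lra. move=> y _; rewrite Rminus_diag_eq // Rabs_R0; lra. Qed.

Lemma ct_coord {n} (x : vec n) i : ct x (fun y => y i).
Proof.
move=> e he; exists e; split => // y hy.
apply: Rle_lt_trans hy.
exact: (coord_le_norm (fun k => y k - x k) i).
Qed.

Lemma ct_add {n} (x : vec n) {f g} : ct x f -> ct x g -> ct x (fun y => f y + g y).
Proof.
move=> hf hg e he.
case: (hf (e/2)) => [|d1 [h1 H1]]; first lra.
case: (hg (e/2)) => [|d2 [h2 H2]]; first lra.
exists (Rmin d1 d2); split; first exact: Rmin_pos.
move=> y hy.
have := H1 y (Rlt_le_trans _ _ _ hy (Rmin_l _ _)).
have := H2 y (Rlt_le_trans _ _ _ hy (Rmin_r _ _)).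
move=> a b.
have -> : f y + g y - (f x + g x) = (f y - f x) + (g y - g x) by ring.
apply: Rle_lt_trans (Rabs_triang _ _) _; lra.
Qed.

Lemma ct_ext {n} (x : vec n) {f g} : (forall y, f y = g y) -> ct x g -> ct x f.
Proof. move=> h; have -> : f = g by apply: functional_extensionality. done. Qed.

Lemma ct_comp {n} (x : vec n) {g h} : ct x g -> continuity_pt h (g x) ->
  ct x (fun y => h (g y)).
Proof.
move=> hg hh eps he.
rewrite /continuity_pt /continue_in /limit1_in /limit_in in hh.
case: (hh eps he) => a [ha H].
case: (hg a ha) => d [hd Hd].
exists d; split => // y hy.
case: (Req_dec (g x) (g y)) => e.
- by rewrite -e Rminus_diag_eq ?Rabs_R0.
- have := H (g y); rewrite /= /R_dist; apply; split.
  + by split.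
  + exact: Hd.
Qed.

Lemma ct_scal {n} (x : vec n) c {f} : ct x f -> ct x (fun y => c * f y).
Proof.
move=> hf; apply: (@ct_comp _ x f (fun z => c * z)) => //.
apply: (@dlim_cont _ _ (c)); apply: dR; auto_derive => //; ring.
Qed.

Lemma ct_sq {n} (x : vec n) {f} : ct x f -> ct x (fun y => f y * f y).
Proof.
move=> hf; apply: (@ct_comp _ x f (fun z => z * z)) => //.
apply: (@dlim_cont _ _ (2 * f x)); apply: dR; auto_derive => //; ring.
Qed.

Lemma ct_mul {n} (x : vec n) {f g} : ct x f -> ct x g -> ct x (fun y => f y * g y).
Proof.
move=> hf hg.
apply: (@ct_ext _ x _ (fun y => /4 * ((f y + g y) * (f y + g y)) +
   (-/4) * ((f y + (-1) * g y) * (f y + (-1) * g y)))).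
  move=> y; field.
apply: ct_add; apply: ct_scal; apply: ct_sq; apply: ct_add => //.
exact: ct_scal.
Qed.

Lemma ct_bigsum {n} (x : vec n) {F : 'I_n -> vec n -> R} (r : seq 'I_n) :
  (forall k, ct x (F k)) -> ct x (fun y => \big[Rplus/R0]_(k <- r) F k y).
Proof.
move=> h; elim: r => [|k r IH].
- apply: (@ct_ext _ x _ (fun _ => 0)); last exact: ct_const.
  by move=> y; rewrite big_nil.
- apply: (@ct_ext _ x _ (fun y => F k y + \big[Rplus/R0]_(k <- r) F k y)).
    by move=> y; rewrite big_cons.
  exact: ct_add.
Qed.

Lemma ct_rsum {n} (x : vec n) {F : 'I_n -> vec n -> R} :
  (forall k, ct x (F k)) -> ct x (fun y => rsum (fun k => F k y)).
Proof. move=> h; exact: (@ct_bigsum _ x F (index_enum 'I_n) h). Qed.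

Lemma ct_NN {n} (x : vec n) : ct x NN.
Proof.
apply: (@ct_rsum _ x (fun k y => y k * y k)) => k.
apply: ct_mul; exact: ct_coord.
Qed.

Lemma Rpower_cont z e : 0 < z -> continuity_pt (fun z => Rpower z e) z.
Proof. move=> hz; apply: (@dlim_cont _ _ (e * Rpower z (e - 1))); exact: derivable_pt_lim_power. Qed.

Lemma ct_cont_on {n} (U : vec n -> Prop) g : (forall x, U x -> ct x g) -> cont_on U g.
Proof.
move=> h x hx e he; case: (h x hx e he) => d [hd H]; exists d; split => // y _; exact: H.
Qed.


Lemma dmult {f g a lf lg l} : derivable_pt_lim f a lf -> derivable_pt_lim g a lg ->
  l = lf * g a + f a * lg -> derivable_pt_lim (fun t => f t * g t) a l.
Proof. move=> hf hg ->; exact: (derivable_pt_lim_mult f g a lf lg hf hg). Qed.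
Lemma dplus {f g a lf lg l} : derivable_pt_lim f a lf -> derivable_pt_lim g a lg ->
  l = lf + lg -> derivable_pt_lim (fun t => f t + g t) a l.
Proof. move=> hf hg ->; exact: (derivable_pt_lim_plus f g a lf lg hf hg). Qed.
Lemma dconst c a : derivable_pt_lim (fun _ => c) a 0.
Proof. exact: derivable_pt_lim_const. Qed.
Lemma deq {f a l l'} : derivable_pt_lim f a l -> l = l' -> derivable_pt_lim f a l'.
Proof. by move=> h <-. Qed.
Lemma dext {f g a l} : (forall t, f t = g t) -> derivable_pt_lim g a l -> derivable_pt_lim f a l.
Proof. by move=> h; have -> : f = g by apply: functional_extensionality. Qed.

Lemma line_coord {n} (x : vec n) j t k : line x j t k = x k + t * del k j.
Proof. by []. Qed.

Lemma d_line_coord {n} (x : vec n) j k : derivable_pt_lim (fun t => line x j t k) 0 (del k j).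
Proof.
apply: (@dext _ (fun t => x k + t * del k j)) => // .
apply: dR; auto_derive => //; ring.
Qed.

Lemma d_NN {n} (x : vec n) j : derivable_pt_lim (fun t => NN (line x j t)) 0 (2 * x j).
Proof.
apply: (@dext _ (fun t => NN x + 2 * t * x j + t ^ 2)); first by move=> t; rewrite NN_line.
apply: dR; auto_derive => //; ring.
Qed.

Lemma d_NNpow {n} (x : vec n) j e : 0 < NN x ->
  derivable_pt_lim (fun t => Rpower (NN (line x j t)) e) 0
    (e * Rpower (NN x) (e - 1) * (2 * x j)).
Proof.
move=> hN.
have H := derivable_pt_lim_comp (fun t => NN (line x j t)) (fun z => Rpower z e) 0
   (2 * x j) (e * Rpower (NN x) (e - 1)) (d_NN x j).
have E : NN (line x j 0) = NN x.
  by rewrite NN_line; ring.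
rewrite E in H; apply: H; exact: derivable_pt_lim_power.
Qed.

Definition term (n : nat) := (R * R * seq 'I_n)%type.
Fixpoint prodl {n} (L : seq 'I_n) (x : vec n) : R :=
  match L with [::] => 1 | l :: L' => x l * prodl L' x end.
Definition evalT {n} (t : term n) (x : vec n) : R :=
  let: (c, e, L) := t in c * Rpower (NN x) e * prodl L x.
Fixpoint evalE {n} (ts : seq (term n)) (x : vec n) : R :=
  match ts with [::] => 0 | t :: ts' => evalT t x + evalE ts' x end.
Fixpoint dprod {n} (j : 'I_n) (L : seq 'I_n) : seq (R * seq 'I_n) :=
  match L with
  | [::] => [::]
  | l :: L' => (del l j, L') :: map (fun p => (p.1, l :: p.2)) (dprod j L')
  end.
Fixpoint evalP {n} (ps : seq (R * seq 'I_n)) (x : vec n) : R :=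
  match ps with [::] => 0 | p :: ps' => p.1 * prodl p.2 x + evalP ps' x end.
Definition dterm {n} (j : 'I_n) (t : term n) : seq (term n) :=
  let: (c, e, L) := t in
  (c * e * 2, e - 1, j :: L) :: map (fun p => (c * p.1, e, p.2)) (dprod j L).
Fixpoint dexpr {n} (j : 'I_n) (ts : seq (term n)) : seq (term n) :=
  match ts with [::] => [::] | t :: ts' => dterm j t ++ dexpr j ts' end.

Lemma evalP_cons {n} (ps : seq (R * seq 'I_n)) l x :
  evalP (map (fun p => (p.1, l :: p.2)) ps) x = x l * evalP ps x.
Proof. elim: ps => [|p ps IH] /=; first ring. rewrite IH; ring. Qed.

Lemma evalE_app {n} (a b : seq (term n)) x : evalE (a ++ b) x = evalE a x + evalE b x.
Proof. elim: a => [|t a IH] /=; first ring. rewrite IH; ring. Qed.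

Lemma evalE_mapc {n} (ps : seq (R * seq 'I_n)) c e x :
  evalE (map (fun p => (c * p.1, e, p.2)) ps) x = c * Rpower (NN x) e * evalP ps x.
Proof. elim: ps => [|p ps IH] /=; first ring. rewrite IH; ring. Qed.

Lemma d_prodl {n} (x : vec n) j L :
  derivable_pt_lim (fun t => prodl L (line x j t)) 0 (evalP (dprod j L) x).
Proof.
elim: L => [|l L IH] /=; first exact: dconst.
apply: (dmult (d_line_coord x j l) IH).
rewrite evalP_cons /=.
have -> : forall L', prodl L' (line x j 0) = prodl L' x.
  by move=> L'; have -> : line x j 0 = x by apply: functional_extensionality => k; rewrite line_coord; ring.
rewrite line_coord; ring.
Qed.

Lemma line0 {n} (x : vec n) j : line x j 0 = x.
Proof. by apply: functional_extensionality => k; rewrite line_coord; ring. Qed.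

Lemma d_term {n} (x : vec n) j (t : term n) : 0 < NN x ->
  derivable_pt_lim (fun s => evalT t (line x j s)) 0 (evalE (dterm j t) x).
Proof.
move=> hN; case: t => [[c e] L] /=.
have H1 := @dmult (fun _ => c) (fun s => Rpower (NN (line x j s)) e) _ _ _ _
   (dconst c 0) (d_NNpow x j e hN) (erefl _).
have H2 := dmult H1 (d_prodl x j L) (erefl _).
apply: (deq H2).
rewrite evalE_mapc !line0 /=; ring.
Qed.

Lemma d_expr {n} (x : vec n) j (ts : seq (term n)) : 0 < NN x ->
  derivable_pt_lim (fun s => evalE ts (line x j s)) 0 (evalE (dexpr j ts) x).
Proof.
move=> hN; elim: ts => [|t ts IH] /=; first exact: dconst.
rewrite evalE_app; exact: (dplus (d_term x j t hN) IH (erefl _)).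
Qed.

Lemma ct_prodl {n} (x : vec n) L : ct x (prodl L).
Proof.
elim: L => [|l L IH] /=; first exact: ct_const.
apply: (@ct_mul _ x (fun y => y l)) => //; exact: ct_coord.
Qed.

Lemma ct_NNpow {n} (x : vec n) e : 0 < NN x -> ct x (fun y => Rpower (NN y) e).
Proof. move=> hN; exact: (@ct_comp _ x NN (fun z => Rpower z e) (ct_NN x) (Rpower_cont _ e hN)). Qed.

Lemma ct_evalE {n} (x : vec n) ts : 0 < NN x -> ct x (evalE ts).
Proof.
move=> hN; elim: ts => [|[[c e] L] ts IH] /=; first exact: ct_const.
apply: (@ct_add _ x (evalT (c, e, L))) => //=.
apply: ct_mul; last exact: ct_prodl.
apply: ct_scal; exact: ct_NNpow.
Qed.

Fixpoint iterd {n} (ts : seq (term n)) (l : seq 'I_n) : seq (term n) :=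
  match l with [::] => ts | j :: l' => dexpr j (iterd ts l') end.

Lemma smooth_expr {n} (ts : seq (term n)) f :
  (forall x, Omega x -> evalE ts x = f x) -> smooth_on (@Omega n) f.
Proof.
move=> h; exists (fun l => evalE (iterd ts l)); split => //= l; split.
- apply: ct_cont_on => x /Omega_NN [hx _]; exact: ct_evalE.
- move=> x /Omega_NN [hx _] j /=; exact: d_expr.
Qed.


Lemma Rpower_pos x y : 0 < Rpower x y.
Proof. rewrite /Rpower; exact: exp_pos. Qed.

Lemma Rpower_m1 N e : 0 < N -> Rpower N (e - 1) = Rpower N e / N.
Proof. move=> h; rewrite /Rminus Rpower_plus Rpower_Ropp Rpower_1 //. Qed.

Lemma norm_pos {n} (x : vec n) : 0 < NN x -> 0 < norm x.
Proof. move=> h; rewrite norm_NN; exact: sqrt_lt_R0. Qed.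

Lemma Rpower_norm {n} (x : vec n) g : 0 < NN x ->
  Rpower (norm x) g = Rpower (NN x) (g / 2).
Proof.
move=> h; rewrite norm_NN -Rpower_sqrt // Rpower_mult; congr Rpower; field.
Qed.

Lemma u_val {n} g (x : vec n) a : 0 < NN x ->
  u_gamma g x a = Rpower (NN x) (g / 2) * x a.
Proof.
move=> h; rewrite /u_gamma; case: Req_dec_T => e.
- have := norm_pos _ h; lra.
- by rewrite /vscale Rpower_norm.
Qed.

Definition e0 {n} (g : R) (a : 'I_n) : seq (term n) := [:: (1, g / 2, [:: a])].

Lemma e0_val {n} g (x : vec n) a : 0 < NN x -> evalE (e0 g a) x = u_gamma g x a.
Proof. move=> h; rewrite u_val //= ; ring. Qed.

Lemma u_smooth {n} g : smooth_map (@Omega n) (u_gamma g).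
Proof.
move=> a; apply: (smooth_expr (e0 g a)) => x /Omega_NN [h _]; exact: e0_val.
Qed.

Lemma d_local f g l : (exists d, 0 < d /\ forall t, Rabs t < d -> f t = g t) ->
  derivable_pt_lim g 0 l -> derivable_pt_lim f 0 l.
Proof.
move=> [d [hd H]] hg e he.
case: (hg e he) => dl hdl.
have hm : 0 < Rmin d dl by apply: Rmin_pos => //; exact: cond_pos.
exists (mkposreal _ hm) => h hh0 hh /=.
have hh' : Rabs h < Rmin d dl by exact hh.
have e1 : f (0 + h) = g (0 + h).
  apply: H; rewrite Rplus_0_l; apply: Rlt_le_trans hh' (Rmin_l _ _).
have e2 : f 0 = g 0 by apply: H; rewrite Rabs_R0.
rewrite e1 e2; apply: hdl => //; apply: Rlt_le_trans hh' (Rmin_r _ _).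
Qed.

Lemma Omega_near {n} (x : vec n) j : Omega x ->
  exists d, 0 < d /\ forall t, Rabs t < d -> Omega (line x j t).
Proof.
move=> /Omega_NN [h1 h2].
have hc : continuity_pt (fun t => NN x + 2 * t * x j + t ^ 2) 0.
  apply: (@dlim_cont _ _ (2 * x j)); apply: dR; auto_derive => //; ring.
rewrite /continuity_pt /continue_in /limit1_in /limit_in in hc.
have hm : 0 < Rmin (NN x) (1 - NN x) by apply: Rmin_pos; lra.
case: (hc _ hm) => a [ha H].
exists a; split => // t ht; apply/Omega_NN; rewrite NN_line.
case: (Req_dec t 0) => [->|t0]; first (simpl; lra).
have := H t; rewrite /= /R_dist; move=> H'.
have : Rabs (NN x + 2 * t * x j + t ^ 2 - (NN x + 2 * 0 * x j + 0 ^ 2)) <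
   Rmin (NN x) (1 - NN x).
  apply: H'; split; first by split => //; auto.
  by rewrite Rminus_0_r.
have := Rmin_l (NN x) (1 - NN x); have := Rmin_r (NN x) (1 - NN x).
move=> r1 r2 /Rabs_def2; lra.
Qed.

Lemma Du_val {n} g (Du : vec n -> mat n) x a i :
  isDu (@Omega n) (u_gamma g) Du -> Omega x ->
  Du x a i = evalE (dexpr i (e0 g a)) x.
Proof.
move=> hD hx.
have hN : 0 < NN x by case/Omega_NN: hx.
apply: (uniqueness_limite _ 0 _ _ (hD x hx a i)).
apply: (@d_local _ (fun t => evalE (e0 g a) (line x i t))); last exact: d_expr.
case: (Omega_near x i hx) => d [hd H]; exists d; split => // t ht.
rewrite e0_val //; by case/Omega_NN: (H t ht).
Qed.

Lemma D2u_val {n} g (Du : vec n -> mat n) D2u x b i j :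
  isDu (@Omega n) (u_gamma g) Du -> isD2u (@Omega n) Du D2u -> Omega x ->
  D2u x b i j = evalE (dexpr i (dexpr j (e0 g b))) x.
Proof.
move=> hD hD2 hx.
have hN : 0 < NN x by case/Omega_NN: hx.
apply: (uniqueness_limite _ 0 _ _ (hD2 x hx b i j)).
apply: (@d_local _ (fun t => evalE (dexpr j (e0 g b)) (line x i t))); last exact: d_expr.
case: (Omega_near x i hx) => d [hd H]; exists d; split => // t ht.
exact: (Du_val g Du _ b j hD (H t ht)).
Qed.

Lemma Du_closed {n} g (x : vec n) b j : 0 < NN x ->
  evalE (dexpr j (e0 g b)) x =
  Rpower (NN x) (g/2) * (del b j + g * x b * x j / NN x).
Proof. move=> h; rewrite /= Rpower_m1 //; field; lra. Qed.

Lemma D2u_closed {n} g (x : vec n) b i j : 0 < NN x ->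
  evalE (dexpr i (dexpr j (e0 g b))) x =
  g * Rpower (NN x) (g/2) / NN x *
   ((g - 2) / NN x * x i * x j * x b + del j i * x b + del b i * x j + del b j * x i).
Proof. move=> h; rewrite /= !Rpower_m1 //; field; lra. Qed.

Open Scope ring_scope.
Open Scope R_scope.


Definition mx {n} (P : mat n) : 'M[R]_n := \matrix_(i, j) P i j.
Definition mmul {n} (P Q : mat n) : mat n := fun a b => rsum (fun k => P a k * Q k b).

Lemma sum_rsum {n} (F : 'I_n -> R) : (\sum_(j < n) F j)%R = rsum F.
Proof. reflexivity. Qed.

Lemma det_mx {n} (P : mat n) : det P = \det (mx P).
Proof.
rewrite /det /determinant; apply: eq_bigr => s _.
rewrite /psign; case: (perm.odd_perm s) => /=.
- rewrite GRing.expr1; congr Rmult; apply: eq_bigr => i _; by rewrite mxE.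
- rewrite GRing.expr0; congr Rmult; apply: eq_bigr => i _; by rewrite mxE.
Qed.

Lemma mx_mul {n} (P Q : mat n) : (mx P *m mx Q)%R = mx (mmul P Q).
Proof.
apply/matrixP => a b; rewrite !mxE /mmul -sum_rsum; apply: eq_bigr => k _; by rewrite !mxE.
Qed.

Lemma mx_id {n} {P Q : mat n} : (forall a b, mmul P Q a b = del a b) ->
  (mx P *m mx Q)%R = 1%:M%R.
Proof.
move=> h; rewrite mx_mul; apply/matrixP => a b; rewrite !mxE h /del.
by case: (a == b).
Qed.

Lemma det_ne0 {n} {P Q : mat n} : (forall a b, mmul P Q a b = del a b) -> det P <> 0.
Proof.
move=> h; have := f_equal determinant (mx_id h).
rewrite det_mulmx det1 -det_mx => e E; rewrite E in e.
have : (0 * \det (mx Q))%R = 0 by rewrite GRing.mul0r.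
move=> e'; rewrite e' in e; by apply: R1_neq_R0.
Qed.

Lemma cof_inv {n} (P Q : mat n) a i : (forall a b, mmul P Q a b = del a b) ->
  cofactor (mx P) a i = det P * Q i a.
Proof.
move=> h.
have E : (\adj (mx P) = \det (mx P) *: mx Q)%R.
  by rewrite -[X in X = _]mulmx1 -(mx_id h) mulmxA mul_adj_mx mul_scalar_mx.
have := congr1 (fun M : 'M[R]_n => M i a) E.
by rewrite !mxE det_mx => ->.
Qed.

Lemma det_line {n} (P : mat n) a i t :
  \det (mx (madd P (mscale t (matE a i)))) = \det (mx P) + t * cofactor (mx P) a i.
Proof.
rewrite (expand_det_row _ a) [X in _ = X + _](expand_det_row _ a).
have cof : forall j, cofactor (mx (madd P (mscale t (matE a i)))) a j = cofactor (mx P) a j.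
  move=> j; rewrite /cofactor. congr (_ * _)%R; congr determinant.
  apply/matrixP => k l; rewrite !mxE /madd /mscale /matE.
  by rewrite eq_sym (negbTE (neq_lift a k)) /=; ring.
rewrite !sum_rsum.
rewrite (@rsum_ext _ _ (fun j => mx P a j * cofactor (mx P) a j +
   (t * cofactor (mx P) a i) * (del j i * 1))).
  rewrite rsum_add rsum_scal rsum_del Rmult_1_r; reflexivity.
move=> j; rewrite cof !mxE /madd /mscale /matE eqxx /= /del.
rewrite -!RmultE -?RplusE; case: eqP => [->|_]; ring.
Qed.

Lemma mx_mtm {n} (P : mat n) : mx (mtm P) = ((mx P)^T *m mx P)%R.
Proof.
apply/matrixP => a b; rewrite !mxE /mtm -sum_rsum; apply: eq_bigr => k _; by rewrite !mxE.
Qed.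

Lemma det_mtm {n} (P : mat n) : det (mtm P) = det P ^ 2.
Proof. rewrite !det_mx mx_mtm det_mulmx det_tr /= Rmult_1_r; reflexivity. Qed.

Lemma frob2_line {n} (P : mat n) a i t :
  frob2 (madd P (mscale t (matE a i))) = frob2 P + 2 * t * P a i + t ^ 2.
Proof.
rewrite /frob2.
rewrite (@rsum_ext _ _ (fun b => rsum (fun j => P b j ^ 2) +
   (2 * t * P a i + t ^ 2) * (del b a * 1))).
  by rewrite rsum_add rsum_scal rsum_del; ring.
move=> b.
rewrite (@rsum_ext _ _ (fun j => P b j ^ 2 + (2 * t * P b i + t ^ 2) * del b a * (del j i * 1))).
  rewrite rsum_add rsum_scal rsum_del /del.
  case: (b =P a) => [->|_]; ring.
move=> j; rewrite /madd /mscale /matE /del.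
case: (b == a); case: (j =P i) => [->|_] /=; ring.
Qed.


Lemma Kfin_line {n} (P Q : mat n) a i t : (forall a b, mmul P Q a b = del a b) ->
  Kfin (madd P (mscale t (matE a i))) =
  (frob2 P + 2 * t * P a i + t ^ 2) /
   Rpower ((det P + t * (det P * Q i a)) ^ 2) (/ INR n).
Proof.
move=> h; rewrite /Kfin frob2_line det_mtm det_mx det_line (cof_inv _ _ _ _ h) -det_mx.
reflexivity.
Qed.

Lemma KP_val {n} (KP : mat n -> mat n) (P Q : mat n) a i : INR n <> 0 ->
  Kgrad KP -> (forall a b, mmul P Q a b = del a b) ->
  KP P a i = (2 * P a i - 2 / INR n * frob2 P * Q i a) /
      Rpower (det P ^ 2) (/ INR n).
Proof.
move=> hn hK h.
have hd := det_ne0 h.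
apply: (uniqueness_limite _ 0 _ _ (hK P hd a i)).
apply: (@dext _ (fun t => (frob2 P + 2 * t * P a i + t ^ 2) /
   Rpower ((det P + t * (det P * Q i a)) ^ 2) (/ INR n))).
  by move=> t; exact: Kfin_line.
apply: dR; rewrite /Rpower; auto_derive.
  rewrite Rmult_0_l Rplus_0_r Rmult_1_r; split; last (split; [exact: exp_neq_0|done]).
  have : det P * det P <> 0 by apply: Rmult_integral_contrapositive.
  have := Rle_0_sqr (det P); rewrite /Rsqr; lra.
rewrite !Rmult_0_l !Rplus_0_r !Rmult_1_r.
have -> : det P ^ 2 = det P * det P by ring.
set E := exp _.
have hE : E <> 0 by exact: exp_neq_0.
field; auto.
Qed.


Lemma rsum_const {n} c : rsum (fun _ : 'I_n => c) = INR n * c.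
Proof.
rewrite /rsum big_const_ord; elim: n => [|n IH] /=; first ring.
rewrite IH; case: n {IH} => [|n] /=; ring.
Qed.

Lemma del_refl {n} (i : 'I_n) : del i i = 1.
Proof. by rewrite /del eqxx. Qed.

Definition Pm {n} (g : R) (x : vec n) : mat n :=
  fun b j => Rpower (NN x) (g/2) * (del b j + g * x b * x j / NN x).
Definition Qm {n} (g : R) (x : vec n) : mat n :=
  fun b j => / Rpower (NN x) (g/2) * (del b j - g / (1 + g) * x b * x j / NN x).

Lemma PQ_id {n} g (x : vec n) a b : 0 < NN x -> 1 + g <> 0 ->
  mmul (Pm g x) (Qm g x) a b = del a b.
Proof.
move=> hN hg; rewrite /mmul /Pm /Qm.
set p := Rpower (NN x) (g/2).
have hp : p <> 0 by have := Rpower_pos (NN x) (g/2); rewrite -/p; lra.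
rewrite (@rsum_ext _ _ (fun k => 1 * (del k a * del k b)
   + (- (g / (1 + g)) / NN x * x b) * (del k a * x k)
   + (g / NN x * x a) * (del k b * x k)
   + (- (g * (g / (1 + g))) / (NN x * NN x) * x a * x b) * (x k * x k))).
  rewrite !rsum_add !rsum_scal !rsum_del; change (rsum (fun k => x k * x k)) with (NN x).
  field; lra.
move=> k; rewrite (del_sym a k); field; lra.
Qed.

Lemma frob_P {n} g (x : vec n) : 0 < NN x ->
  frob2 (Pm g x) = Rpower (NN x) (g/2) ^ 2 * (INR n + 2 * g + g ^ 2).
Proof.
move=> hN; rewrite /frob2 /Pm.
set p := Rpower (NN x) (g/2).
rewrite (@rsum_ext _ _ (fun b => p ^ 2 * 1 + (p^2 * (2 * g + g ^ 2) / NN x) * (x b * x b))).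
  rewrite rsum_add !rsum_scal rsum_const; change (rsum (fun k => x k * x k)) with (NN x).
  field; lra.
move=> b.
rewrite (@rsum_ext _ _ (fun j => p ^ 2 * (del j b * del j b)
   + (2 * p ^ 2 * g / NN x * x b) * (del j b * x j)
   + (p ^ 2 * g ^ 2 / (NN x * NN x) * x b * x b) * (x j * x j))).
  rewrite !rsum_add !rsum_scal !rsum_del del_refl; change (rsum (fun k => x k * x k)) with (NN x).
  field; lra.
move=> j; rewrite (del_sym b j); field; lra.
Qed.


Definition Kc {n} (g : R) := INR n + 2 * g + g ^ 2.
Definition Ac {n} g (x : vec n) := Rpower (NN x) (g/2) * (1 - @Kc n g / INR n).
Definition Bc {n} g (x : vec n) := Rpower (NN x) (g/2) *
   (g / NN x + @Kc n g * g / (INR n * (1 + g) * NN x)).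

Lemma KP_form {n} (KP : mat n -> mat n) g (x : vec n) a i :
  INR n <> 0 -> 0 < NN x -> 1 + g <> 0 -> Kgrad KP ->
  KP (Pm g x) a i = 2 / Rpower (det (Pm g x) ^ 2) (/ INR n) *
    (Ac g x * del a i + Bc g x * x a * x i).
Proof.
move=> hn hN hg hK.
rewrite (KP_val KP (Pm g x) (Qm g x) a i hn hK (fun a b => PQ_id g x a b hN hg)).
have h1 := Rpower_pos (det (Pm g x) ^ 2) (/ INR n).
set R0 := Rpower (det (Pm g x) ^ 2) (/ INR n) in h1 *.
rewrite frob_P // /Pm /Qm /Ac /Bc /Kc (del_sym i a).
have h2 := Rpower_pos (NN x) (g/2).
field; repeat split; lra.
Qed.

Lemma null_zero {n} (KP : mat n -> mat n) g (x : vec n) z :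
  (2 <= n)%N -> 0 < NN x -> -1 < g -> g <> 0 -> Kgrad KP ->
  in_null_tr (KP (Pm g x)) z -> forall a, z a = 0.
Proof.
move=> h2 hN hg hg0 hK hz.
have hn : 2 <= INR n by apply: (le_INR 2); apply/leP.
have hn0 : INR n <> 0 by lra.
have hg1 : 1 + g <> 0 by lra.
set c0 := 2 / Rpower (det (Pm g x) ^ 2) (/ INR n).
have hc0 : c0 <> 0.
  have := Rpower_pos (det (Pm g x) ^ 2) (/ INR n); rewrite /c0 => h.
  apply: Rmult_integral_contrapositive; split; [lra | apply: Rinv_neq_0_compat; lra].
set s := rsum (fun a => x a * z a).
have E : forall i, Ac g x * z i + Bc g x * x i * s = 0.
  move=> i; have := hz i.
  rewrite (@rsum_ext _ _ (fun a => (c0 * Ac g x) * (del a i * z a) + (c0 * Bc g x * x i) * (x a * z a))).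
    rewrite rsum_add !rsum_scal rsum_del -/s => e.
    apply: (Rmult_eq_reg_l c0) => //; rewrite Rmult_0_r -e; ring.
  move=> a; rewrite (KP_form KP g x a i hn0 hN hg1 hK) -/c0; ring.
have hp := Rpower_pos (NN x) (g/2).
have hAB : Ac g x + Bc g x * NN x <> 0.
  have -> : Ac g x + Bc g x * NN x =
     Rpower (NN x) (g/2) * ((INR n - 1) * g * (g + 2)) / (INR n * (1 + g)).
    rewrite /Ac /Bc /Kc; field; repeat split; lra.
  apply: Rmult_integral_contrapositive; split; last (apply: Rinv_neq_0_compat; apply: Rmult_integral_contrapositive; lra).
  apply: Rmult_integral_contrapositive; split; first lra.
  apply: Rmult_integral_contrapositive; split; last lra.
  apply: Rmult_integral_contrapositive; split; lra.
have hs : s = 0.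
  have : rsum (fun i => x i * (Ac g x * z i + Bc g x * x i * s)) = 0.
    rewrite (@rsum_ext _ _ (fun i => 0 * 1)); first by rewrite rsum_scal; ring.
    move=> i; rewrite E; ring.
  rewrite (@rsum_ext _ _ (fun i => Ac g x * (x i * z i) + (Bc g x * s) * (x i * x i))).
    rewrite rsum_add !rsum_scal -/s; change (rsum (fun k => x k * x k)) with (NN x).
    move=> e.
    have : (Ac g x + Bc g x * NN x) * s = 0 by rewrite -e; ring.
    case/Rmult_integral => //.
  move=> i; ring.
have hA : Ac g x <> 0.
  have -> : Ac g x = - (Rpower (NN x) (g/2) * (g * (g + 2)) / INR n).
    rewrite /Ac /Kc; field; lra.
  apply: Ropp_neq_0_compat; apply: Rmult_integral_contrapositive; split; last (apply: Rinv_neq_0_compat; lra).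
  apply: Rmult_integral_contrapositive; split; first lra.
  apply: Rmult_integral_contrapositive; split; lra.
move=> a; have := E a; rewrite hs Rmult_0_r Rplus_0_r.
case/Rmult_integral => //.
Qed.


Definition D2c {n} g (x : vec n) (b i j : 'I_n) : R :=
  g * Rpower (NN x) (g/2) / NN x *
   ((g - 2) / NN x * x i * x j * x b + del j i * x b + del b i * x j + del b j * x i).

Lemma first_zero {n} g (x : vec n) c0 (KPx : mat n) i :
  0 < NN x -> 1 + g <> 0 -> INR n <> 0 ->
  (forall b j, KPx b j = c0 * (Ac g x * del b j + Bc g x * x b * x j)) ->
  rsum (fun j => rsum (fun b => KPx b j * D2c g x b i j)) = 0.
Proof.
move=> hN hg hn hK.
set C := c0 * (g * Rpower (NN x) (g/2) / NN x).
set A := Ac g x. set B := Bc g x.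
rewrite (@rsum_ext _ _ (fun j =>
   (C*A*(g-2)/NN x*x i + C*B*(g-2)/NN x * x i * NN x + C*B*x i + C*B*x i) * (x j * x j)
 + (C*A + C*A + C*B*NN x) * (del j i * x j)
 + (C*A*x i) * 1)).
  rewrite !rsum_add !rsum_scal rsum_del rsum_const.
  change (rsum (fun k => x k * x k)) with (NN x).
  have hp := Rpower_pos (NN x) (g/2).
  rewrite /C /A /B /Ac /Bc /Kc; field; repeat split; lra.
move=> j.
rewrite (@rsum_ext _ _ (fun b =>
   (C*A*(g-2)/NN x * x i * x j) * (del b j * x b)
 + (C*A*del j i) * (del b j * x b)
 + (C*A*x j) * (del b j * del b i)
 + (C*A*x i) * (del b j * del b j)
 + (C*B*(g-2)/NN x * x i * x j * x j) * (x b * x b)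
 + (C*B*del j i * x j) * (x b * x b)
 + (C*B*x j * x j) * (del b i * x b)
 + (C*B*x j * x i) * (del b j * x b))).
  rewrite !rsum_add !rsum_scal !rsum_del del_refl.
  change (rsum (fun k => x k * x k)) with (NN x).
  field; lra.
move=> b; rewrite hK /D2c /C -/A -/B; field; lra.
Qed.


Lemma Rpower_base1 g : Rpower 1 g = 1.
Proof. by rewrite /Rpower ln_1 Rmult_0_r exp_0. Qed.

Lemma NN_vzero {n} : NN (@vzero n) = 0.
Proof. rewrite /NN /dot /vzero (@rsum_ext _ _ (fun _ => 0 * 1)); first by rewrite rsum_scal; ring. move=> i; ring. Qed.

Lemma coord0 {n} (x : vec n) k : NN x = 0 -> x k = 0.
Proof. move=> h; have := coord_sq_le x k; rewrite h => H; nra. Qed.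

Lemma u_boundary {n} g (x : vec n) : boundary_Omega x -> u_gamma g x = x.
Proof.
case => [h|->].
- rewrite /u_gamma; case: Req_dec_T => e; first lra.
  apply: functional_extensionality => k; rewrite /vscale h Rpower_base1; ring.
- rewrite /u_gamma; case: Req_dec_T => // e.
  exfalso; apply: e; by rewrite norm_NN NN_vzero sqrt_0.
Qed.

Lemma dist_self {n} (x : vec n) : dist x x = 0.
Proof.
rewrite /dist norm_NN /NN /dot (@rsum_ext _ _ (fun _ => 0 * 1)).
  by rewrite rsum_scal Rmult_0_l sqrt_0.
move=> k; ring.
Qed.

Lemma ct_local {n} (x : vec n) f h : (exists d, 0 < d /\ forall y, dist y x < d -> f y = h y) ->
  ct x h -> ct x f.
Proof.
move=> [d [hd H]] hh e he.
case: (hh e he) => d' [hd' H'].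
exists (Rmin d d'); split; first exact: Rmin_pos.
move=> y hy.
rewrite (H y) ?(H x) ?dist_self //.
- apply: H'; exact: (Rlt_le_trans _ _ _ hy (Rmin_r _ _)).
- exact: (Rlt_le_trans _ _ _ hy (Rmin_l _ _)).
Qed.

Lemma NN_near {n} (x : vec n) : 0 < NN x -> exists d, 0 < d /\ forall y, dist y x < d -> 0 < NN y.
Proof.
move=> h; case: (ct_NN x (NN x) h) => d [hd H]; exists d; split => // y hy.
have := H y hy; move/Rabs_def2; lra.
Qed.

Lemma Rpower_lt1 r e : 0 < r < 1 -> 0 < e -> Rpower r e < 1.
Proof.
move=> [h1 h2] he; rewrite /Rpower -exp_0; apply: exp_increasing.
have : ln r < 0 by rewrite -ln_1; apply: ln_increasing.
nra.
Qed.

Lemma u_cont {n} g : -1 < g -> cont_map (@closure_Omega n) (u_gamma g).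
Proof.
move=> hg a; apply: ct_cont_on => x _.
case: (Req_dec (NN x) 0) => hx0; last first.
  have hx : 0 < NN x by have := NN_ge0 x; lra.
  apply: (@ct_local _ x _ (evalE (e0 g a))); last exact: ct_evalE.
  case: (NN_near x hx) => d [hd H]; exists d; split => // y hy.
  by rewrite e0_val //; apply: H.
have ux : u_gamma g x a = 0.
  rewrite /u_gamma; case: Req_dec_T => e; first done.
  by exfalso; apply: e; rewrite norm_NN hx0 sqrt_0.
move=> e he.
have hg1 : 0 < g + 1 by lra.
exists (Rpower e (/ (g + 1))); split; first exact: Rpower_pos.
move=> y hy; rewrite ux Rminus_0_r.
have hd : dist y x = norm y.
  rewrite /dist; congr norm; apply: functional_extensionality => k.
  by rewrite (coord0 x k hx0) Rminus_0_r.
rewrite hd in hy.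
rewrite /u_gamma; case: Req_dec_T => ny.
  by rewrite /vzero Rabs_R0.
have hny : 0 < norm y by have := sqrt_pos (NN y); rewrite -norm_NN; lra.
rewrite /vscale Rabs_mult Rabs_pos_eq; last (apply: Rlt_le; exact: Rpower_pos).
apply: (Rle_lt_trans _ (Rpower (norm y) g * norm y)).
  apply: Rmult_le_compat_l; [apply: Rlt_le; exact: Rpower_pos | exact: coord_le_norm].
have -> : Rpower (norm y) g * norm y = Rpower (norm y) (g + 1).
  by rewrite Rpower_plus Rpower_1.
have -> : e = Rpower (Rpower e (/ (g + 1))) (g + 1).
  rewrite Rpower_mult Rinv_l; [by rewrite Rpower_1 | lra].
apply: Rlt_Rpower_l => //; split => //.
Qed.


Lemma Du_eq {n} g (Du : vec n -> mat n) x :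
  isDu (@Omega n) (u_gamma g) Du -> Omega x -> Du x = Pm g x.
Proof.
move=> hD hx; have hN : 0 < NN x by case/Omega_NN: hx.
apply: functional_extensionality => b; apply: functional_extensionality => j.
by rewrite (Du_val g Du x b j hD hx) Du_closed.
Qed.

Lemma D2_eq {n} g (Du : vec n -> mat n) D2u x b i j :
  isDu (@Omega n) (u_gamma g) Du -> isD2u (@Omega n) Du D2u -> Omega x ->
  D2u x b i j = D2c g x b i j.
Proof.
move=> hD hD2 hx; have hN : 0 < NN x by case/Omega_NN: hx.
by rewrite (D2u_val g Du D2u x b i j hD hD2 hx) D2u_closed.
Qed.

Lemma is_sol {n} g : (2 <= n)%N -> -1 < g -> is_Qinf_solution (@u_gamma n g).
Proof.
move=> h2 hg.
have hn : 2 <= INR n by apply: (le_INR 2); apply/leP.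
have hn0 : INR n <> 0 by lra.
have hg1 : 1 + g <> 0 by lra.
split; first exact: u_smooth.
split; first exact: u_cont.
split; first by move=> x hx; exact: u_boundary.
move=> Du D2u hD hD2 x hx.
have hN : 0 < NN x by case/Omega_NN: hx.
rewrite (Du_eq g Du x hD hx).
split; first exact: (det_ne0 (fun a b => PQ_id g x a b hN hg1)).
move=> KP KPP Pi hK hKK hPi a.
rewrite /Qinf_comp.
have E2 : forall b i j, D2u x b i j = D2c g x b i j.
  move=> b i j; exact: (D2_eq g Du D2u x b i j hD hD2 hx).
case: (Req_dec g 0) => g0.
- rewrite (@rsum_ext _ _ (fun _ => 0 * 1)); first by rewrite rsum_scal; ring.
  move=> i; rewrite (@rsum_ext _ _ (fun _ => 0 * 1)); first by rewrite rsum_scal; ring.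
  move=> j; rewrite (@rsum_ext _ _ (fun _ => 0 * 1)); first by rewrite rsum_scal; ring.
  move=> b; rewrite E2 /D2c g0; field; lra.
- have Pi0 : forall a' h, Pi a' h = 0.
    move=> a' h.
    have := null_zero KP g x (matvec Pi (basis h)) h2 hN hg g0 hK (proj1 hPi (basis h)) a'.
    rewrite /matvec (@rsum_ext _ _ (fun k => del k h * Pi a' k)) ?rsum_del //.
    by move=> k; rewrite /basis /del; ring.
  rewrite (@rsum_ext _ _ (fun i => KP (Pm g x) a i *
      rsum (fun j => rsum (fun b => KP (Pm g x) b j * D2c g x b i j)))).
    rewrite (@rsum_ext _ _ (fun _ => 0 * 1)); first by rewrite rsum_scal; ring.
    move=> i; rewrite (first_zero g x (2 / Rpower (det (Pm g x) ^ 2) (/ INR n))) //; first ring.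
    move=> b j; exact: KP_form.
  move=> i; rewrite -rsum_scal; apply: rsum_ext => j; rewrite -rsum_scal; apply: rsum_ext => b.
  rewrite E2 (@rsum_ext _ _ (fun _ => 0 * 1)); first by rewrite rsum_scal; ring.
  move=> k; rewrite Pi0; ring.
Qed.


Lemma u_scale {n} g (x : vec n) : 0 < norm x ->
  u_gamma g x = vscale (Rpower (norm x) g) x.
Proof. move=> h; rewrite /u_gamma; case: Req_dec_T => // e; lra. Qed.

Lemma u_norm {n} g (x : vec n) : 0 < norm x ->
  norm (u_gamma g x) = Rpower (norm x) (g + 1).
Proof.
move=> h; rewrite u_scale // norm_scale Rabs_pos_eq; last (apply: Rlt_le; exact: Rpower_pos).
by rewrite Rpower_plus Rpower_1.
Qed.

Lemma u_maps {n} g (x : vec n) : -1 < g -> Omega x -> Omega (u_gamma g x).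
Proof.
move=> hg [h1 h2]; rewrite /Omega u_norm //; split; first exact: Rpower_pos.
apply: Rpower_lt1; lra.
Qed.

Lemma u_inv {n} g1 g2 (x : vec n) : (1 + g1) * (1 + g2) = 1 -> Omega x ->
  u_gamma g2 (u_gamma g1 x) = x.
Proof.
move=> he [h1 h2].
have hn : 0 < norm (u_gamma g1 x) by rewrite u_norm //; exact: Rpower_pos.
rewrite (u_scale g2 _ hn) u_norm // (u_scale g1 _ h1).
apply: functional_extensionality => k; rewrite /vscale Rpower_mult -Rmult_assoc -Rpower_plus.
have -> : (g1 + 1) * g2 + g1 = 0 by nra.
rewrite Rpower_O //; ring.
Qed.

Lemma u_diffeo {n} g : -1 < g -> diffeo_onto_self (@Omega n) (@u_gamma n g).
Proof.
move=> hg.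
set g2 := / (1 + g) - 1.
have hg2 : -1 < g2 by rewrite /g2; have := Rinv_0_lt_compat (1 + g); lra.
have he : (1 + g) * (1 + g2) = 1 by rewrite /g2; field; lra.
have he' : (1 + g2) * (1 + g) = 1 by rewrite Rmult_comm.
split; first exact: u_smooth.
split; first by move=> x hx; exact: u_maps.
exists (u_gamma g2); split; first exact: u_smooth.
split; first by move=> y hy; exact: u_maps.
split; move=> x hx; [exact: u_inv | exact: u_inv].
Qed.

Lemma u_inj {n} g1 g2 : (2 <= n)%N -> @u_gamma n g1 = @u_gamma n g2 -> g1 = g2.
Proof.
move=> h2 e.
have h0 : (0 < n)%N by apply: leq_trans h2.
set i0 := Ordinal h0.
set x0 : vec n := fun k => / 2 * del k i0.
have hN : NN x0 = / 4.
  rewrite /NN /dot (@rsum_ext _ _ (fun k => /4 * (del k i0 * del k i0))).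
    by rewrite rsum_scal rsum_del del_refl; ring.
  move=> k; rewrite /x0; field.
have hN0 : 0 < NN x0 by rewrite hN; lra.
have := congr1 (fun u => u x0 i0) e; rewrite /= !u_val // hN /x0 del_refl.
move=> e1.
have e2 : Rpower (/4) (g1 / 2) = Rpower (/4) (g2 / 2) by nra.
move: e2; rewrite /Rpower => /exp_inv e3.
have hl : ln (/4) < 0 by rewrite -ln_1; apply: ln_increasing; lra.
nra.
Qed.

Theorem theorem2 (n : nat) (hn : (2 <= n)%N) :
  (forall gamma : R, -1 < gamma ->
     is_Qinf_solution (@u_gamma n gamma) /\
     diffeo_onto_self (@Omega n) (@u_gamma n gamma)) /\
  (forall g1 g2 : R, -1 < g1 -> -1 < g2 ->
     @u_gamma n g1 = @u_gamma n g2 -> g1 = g2).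
Proof.
split.
- move=> g hg; split; [exact: is_sol | exact: u_diffeo].
- move=> g1 g2 _ _; exact: u_inj.
Qed.
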